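(* For each $\eta\in(0,\pi/3)$, the convex hull $\mathrm{co}(V)$ is a polygon, where $V=\{b_0\}\cup\{z_k:k\ge0\}\cup\{w_k:k\ge1\}$.
   Context: For $\eta\in(0,\pi/3)$ let $a=\frac{e^{-i\eta}}{2\cos\eta}$, $c=\frac{1}{1-|a|^4}$, and for integers $k\ge0$ put $z_k=ca^{k+1}$, $w_k=1-c|a|^2a^k$, $b_k=a+c|a|^4a^k$. *)

(* Defs.v *)
From Stdlib Require Import Reals List.
From Coquelicot Require Import Coquelicot.
Open Scope R_scope.

Definition a_ (eta : R) : C := Cdiv (cos eta, - sin eta) (RtoC (2 * cos eta)).
Definition c_ (eta : R) : R := 1 / (1 - Cmod (a_ eta) ^ 4).
Definition z_ (eta : R) (k : nat) : C := (RtoC (c_ eta) * Cpow (a_ eta) (S k))%C.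
Definition w_ (eta : R) (k : nat) : C :=
  (RtoC 1 - RtoC (c_ eta * Cmod (a_ eta) ^ 2) * Cpow (a_ eta) k)%C.
Definition b_ (eta : R) (k : nat) : C :=
  (a_ eta + RtoC (c_ eta * Cmod (a_ eta) ^ 4) * Cpow (a_ eta) k)%C.

Definition Vset (eta : R) (p : C) : Prop :=
  p = b_ eta 0 \/ (exists k : nat, p = z_ eta k) \/
  (exists k : nat, (1 <= k)%nat /\ p = w_ eta k).

Definition convex_hull (S : C -> Prop) (x : C) : Prop :=
  exists l : list (R * C),
    List.Forall (fun p => 0 <= fst p /\ S (snd p)) l /\
    fold_right (fun p s => fst p + s) 0 l = 1 /\
    x = fold_right (fun p s => (RtoC (fst p) * snd p + s)%C) (RtoC 0) l.

Definition is_polygon (P : C -> Prop) : Prop :=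
  exists F : list C, forall x, P x <-> convex_hull (fun y => In y F) x.

(* Main.v *)
Require Import Defs.
From Stdlib Require Import Reals List.
From Coquelicot Require Import Coquelicot.
From Stdlib Require Import Lra Lia Psatz ZArith Wf_nat.
Open Scope R_scope.

Definition wsum (l : list (R * C)) : R := fold_right (fun p s => fst p + s) 0 l.
Definition csum (l : list (R * C)) : C :=
  fold_right (fun p s => (RtoC (fst p) * snd p + s)%C) (RtoC 0) l.
Definition cn (T : C -> Prop) (x : C) (s : R) : Prop :=
  exists l : list (R * C),
    List.Forall (fun p => 0 <= fst p /\ T (snd p)) l /\ wsum l = s /\ x = csum l.

Lemma hull_cone T x : convex_hull T x <-> cn T x 1.
Proof. unfold convex_hull, cn, wsum, csum. tauto. Qed.

Lemma C_ext (x y : C) : fst x = fst y -> snd x = snd y -> x = y.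
Proof. destruct x, y; simpl; intros; subst; auto. Qed.

Lemma cn_nil T : cn T (RtoC 0) 0.
Proof. exists nil; simpl; repeat split; auto. Qed.

Lemma cn_pt (T : C -> Prop) y : T y -> cn T y 1.
Proof.
  intros H; exists ((1, y) :: nil); repeat split.
  - constructor; [simpl; split; [lra|auto]|constructor].
  - unfold wsum; simpl; ring.
  - unfold csum; simpl. apply C_ext; simpl; ring.
Qed.

Lemma cn_scale T x s t : 0 <= t -> cn T x s -> cn T (RtoC t * x)%C (t * s).
Proof.
  intros Ht [l [Hf [Hw Hc]]].
  exists (map (fun p => (t * fst p, snd p)) l). subst. repeat split.
  - induction l as [|p l IH]; simpl; constructor; inversion Hf; subst.
    + simpl. split; [nra| tauto].
    + apply IH; auto.
  - induction l as [|p l IH]; unfold wsum in *; simpl. ring.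
    inversion Hf; subst. rewrite IH; auto. ring.
  - induction l as [|p l IH]; unfold csum in *; simpl.
    apply C_ext; simpl; ring.
    inversion Hf; subst. rewrite <- IH; auto. rewrite RtoC_mult. ring.
Qed.

Lemma cn_add T x y s s' : cn T x s -> cn T y s' -> cn T (x + y)%C (s + s').
Proof.
  intros [l [Hf [Hw Hc]]] [l' [Hf' [Hw' Hc']]].
  exists (l ++ l'). subst. repeat split.
  - apply Forall_app; auto.
  - clear Hf. induction l as [|p l IH]; unfold wsum in *; simpl. ring.
    rewrite IH. ring.
  - clear Hf. induction l as [|p l IH]; unfold csum in *; simpl.
    apply C_ext; simpl; ring.
    rewrite <- IH. ring.
Qed.

Lemma cn_idem (S T : C -> Prop) x s :
  (forall y, S y -> cn T y 1) -> cn S x s -> cn T x s.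
Proof.
  intros HST [l [Hf [Hw Hc]]]. subst. revert Hf.
  induction l as [|p l IH]; intros Hf; unfold wsum, csum; simpl.
  - apply cn_nil.
  - inversion Hf; subst. destruct H1 as [H0 HS].
    replace (fst p + fold_right (fun p0 s => fst p0 + s) 0 l)
      with (fst p * 1 + wsum l) by (unfold wsum; ring).
    apply cn_add. apply cn_scale; auto. apply IH; auto.
Qed.

Lemma combo3 T p q s al be ga :
  cn T p 1 -> cn T q 1 -> cn T s 1 -> 0 <= al -> 0 <= be -> 0 <= ga ->
  al + be + ga = 1 ->
  cn T (RtoC al * p + RtoC be * q + RtoC ga * s)%C 1.
Proof.
  intros Hp Hq Hs Ha Hb Hg Hsum.
  assert (H : cn T (RtoC al * p + RtoC be * q + RtoC ga * s)%C (al * 1 + be * 1 + ga * 1)).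
  { apply cn_add; [apply cn_add|]; apply cn_scale; auto. }
  replace 1 with (al * 1 + be * 1 + ga * 1) by lra. exact H.
Qed.

Lemma a_eq eta : cos eta <> 0 ->
  a_ eta = (/ (2 * cos eta) * cos eta, - (/ (2 * cos eta) * sin eta)).
Proof.
  intros Hc. unfold a_, Cdiv, Cmult, Cinv, RtoC. simpl.
  apply C_ext; simpl; field; auto.
Qed.

Lemma apow eta n : cos eta <> 0 ->
  Cpow (a_ eta) n = ((/ (2 * cos eta)) ^ n * cos (INR n * eta),
                     - ((/ (2 * cos eta)) ^ n * sin (INR n * eta))).
Proof.
  intros Hc. set (r := / (2 * cos eta)).
  induction n as [|n IH].
  - simpl. rewrite Rmult_0_l, cos_0, sin_0. apply C_ext; simpl; ring.
  - rewrite Cpow_S, IH, a_eq by auto. fold r.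
    rewrite S_INR. replace ((INR n + 1) * eta) with (eta + INR n * eta) by ring.
    rewrite cos_plus, sin_plus. apply C_ext; simpl; ring.
Qed.

Lemma nat_up x : 0 < x -> exists n : nat, x < INR n <= x + 1.
Proof.
  intros Hx. destruct (archimed x) as [H1 H2].
  assert (Hz : (0 < up x)%Z) by (apply lt_IZR; lra).
  exists (Z.to_nat (up x)). rewrite INR_IZR_INZ, Znat.Z2Nat.id by lia. lra.
Qed.

Lemma zero_rel (P Q : C) : snd P > 0 -> fst P < 0 -> snd Q < 0 -> fst Q < 0 ->
  exists x0 x1 x2, 0 <= x0 /\ 0 <= x1 /\ 0 <= x2 /\ x0 + x1 + x2 = 1 /\
   (RtoC x0 + RtoC x1 * P + RtoC x2 * Q = 0)%C.
Proof.
  destruct P as [p1 p2], Q as [q1 q2]; simpl; intros H1 H2 H3 H4.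
  assert (Hy0 : 0 < q2 * p1 - p2 * q1) by nra.
  remember (q2 * p1 - p2 * q1) as y0 eqn:Ey0.
  remember (y0 + - q2 + p2) as S eqn:ES.
  assert (HS : 0 < S) by lra.
  exists (y0 / S), (- q2 / S), (p2 / S).
  repeat split.
  - apply Rlt_le, Rdiv_lt_0_compat; auto.
  - apply Rlt_le, Rdiv_lt_0_compat; lra.
  - apply Rlt_le, Rdiv_lt_0_compat; lra.
  - rewrite ES in *; field; lra.
  - assert (E1' : y0 / S + - q2 / S * p1 + p2 / S * q1 = 0).
    { unfold Rdiv. replace (y0 * / S + - q2 * / S * p1 + p2 * / S * q1)
        with ((y0 + - q2 * p1 + p2 * q1) * / S) by ring. rewrite Ey0. ring. }
    assert (E2' : - q2 / S * p2 + p2 / S * q2 = 0).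
    { unfold Rdiv. ring. }
    apply C_ext; simpl; lra.
Qed.

Lemma basics eta : 0 < eta < PI / 3 -> 1/2 < cos eta /\ 0 < sin eta.
Proof.
  intros H. pose proof PI_RGT_0. split.
  - rewrite <- cos_PI3. apply cos_decreasing_1; lra.
  - apply sin_gt_0; lra.
Qed.

Lemma zero_pt eta : 0 < eta < PI / 3 ->
  exists x0 x1 x2 n1 n2, 0 <= x0 /\ 0 <= x1 /\ 0 <= x2 /\ x0 + x1 + x2 = 1 /\
   (RtoC x0 + RtoC x1 * Cpow (a_ eta) n2 + RtoC x2 * Cpow (a_ eta) n1 = 0)%C.
Proof.
  intros H. pose proof PI_RGT_0. destruct (basics eta H) as [Hc Hs].
  assert (Hr : 0 < / (2 * cos eta)) by (apply Rinv_0_lt_compat; lra).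
  destruct (nat_up (PI / (2 * eta))) as [n1 [H1 H1']].
  { apply Rdiv_lt_0_compat; lra. }
  destruct (nat_up (PI / eta)) as [n2 [H2 H2']].
  { apply Rdiv_lt_0_compat; lra. }
  assert (A1 : PI / 2 < INR n1 * eta < PI).
  { split.
    - apply (Rmult_lt_compat_r eta) in H1; [|lra].
      replace (PI / (2 * eta) * eta) with (PI / 2) in H1 by (field; lra). lra.
    - apply (Rmult_le_compat_r eta) in H1'; [|lra].
      replace ((PI / (2 * eta) + 1) * eta) with (PI / 2 + eta) in H1' by (field; lra). lra. }
  assert (A2 : PI < INR n2 * eta < 3 * (PI / 2)).
  { split.
    - apply (Rmult_lt_compat_r eta) in H2; [|lra].
      replace (PI / eta * eta) with PI in H2 by (field; lra). lra.
    - apply (Rmult_le_compat_r eta) in H2'; [|lra].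
      replace ((PI / eta + 1) * eta) with (PI + eta) in H2' by (field; lra). lra. }
  assert (Hc0 : cos eta <> 0) by lra.
  destruct (zero_rel (Cpow (a_ eta) n2) (Cpow (a_ eta) n1)) as [x0 [x1 [x2 Hx]]].
  - rewrite apow by auto; simpl.
    pose proof (pow_lt _ n2 Hr). pose proof (sin_lt_0 (INR n2 * eta)). nra.
  - rewrite apow by auto; simpl.
    pose proof (pow_lt _ n2 Hr). pose proof (cos_lt_0 (INR n2 * eta)). nra.
  - rewrite apow by auto; simpl.
    pose proof (pow_lt _ n1 Hr). pose proof (sin_gt_0 (INR n1 * eta)). nra.
  - rewrite apow by auto; simpl.
    pose proof (pow_lt _ n1 Hr). pose proof (cos_lt_0 (INR n1 * eta)). nra.
  - exists x0, x1, x2, n1, n2. exact Hx.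
Qed.

Lemma rec_rel eta : 0 < eta < PI / 3 ->
  exists m al be, (2 < m)%nat /\ 0 <= al /\ 0 <= be /\ al + be <= 1 /\
    Cpow (a_ eta) m = (RtoC al + RtoC be * a_ eta)%C.
Proof.
  intros H. pose proof PI_RGT_0. destruct (basics eta H) as [Hc Hs].
  assert (Hc0 : cos eta <> 0) by lra.
  set (r := / (2 * cos eta)).
  assert (Hr : 0 < r) by (apply Rinv_0_lt_compat; lra).
  assert (Hr1 : r < 1).
  { unfold r. rewrite <- Rinv_1. apply Rinv_lt_contravar; lra. }
  destruct (pow_lt_1_zero r ltac:(rewrite Rabs_pos_eq; lra) (sin eta / 3)
              ltac:(lra)) as [N HN].
  destruct (nat_up (2 * INR (S N) * PI / eta)) as [m [Hm Hm']].
  { apply Rdiv_lt_0_compat; [|lra]. pose proof (pos_INR N). rewrite S_INR. nra. }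
  set (t := INR m * eta - 2 * INR (S N) * PI).
  assert (Ht : 0 < t <= eta).
  { unfold t. split.
    - apply (Rmult_lt_compat_r eta) in Hm; [|lra].
      replace (2 * INR (S N) * PI / eta * eta) with (2 * INR (S N) * PI) in Hm
        by (field; lra). lra.
    - apply (Rmult_le_compat_r eta) in Hm'; [|lra].
      replace ((2 * INR (S N) * PI / eta + 1) * eta) with (2 * INR (S N) * PI + eta)
        in Hm' by (field; lra). lra. }
  assert (Hmbig : INR (S N) * 6 < INR m).
  { assert (2 * INR (S N) * PI / eta > INR (S N) * 6); [|lra].
    apply (Rmult_lt_reg_r eta); [lra|].
    replace (2 * INR (S N) * PI / eta * eta) with (2 * INR (S N) * PI) by (field; lra).
    pose proof (pos_INR N). rewrite S_INR in *. nra. }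
  assert (HmN : (N <= m)%nat).
  { apply INR_le. rewrite S_INR in Hmbig. pose proof (pos_INR N). lra. }
  assert (Hm2 : (2 < m)%nat).
  { apply INR_lt. rewrite S_INR in Hmbig. pose proof (pos_INR N).
    replace (INR 2) with 2 by (simpl; ring). lra. }
  specialize (HN m HmN). rewrite Rabs_pos_eq in HN by (apply pow_le; lra).
  assert (Hrm : 0 < r ^ m) by (apply pow_lt; lra).
  set (al := r ^ m * sin (eta - t) / sin eta).
  set (be := r ^ m * sin t / (r * sin eta)).
  assert (Hst : 0 < sin t) by (apply sin_gt_0; lra).
  assert (Hset : 0 <= sin (eta - t)) by (apply sin_ge_0; lra).
  assert (Hal : 0 <= al) by (unfold al; apply Rmult_le_pos; [nra| left; apply Rinv_0_lt_compat; lra]).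
  assert (Hbe : 0 <= be).
  { unfold be; apply Rmult_le_pos; [nra| left; apply Rinv_0_lt_compat; nra]. }
  assert (Eal : al * sin eta = r ^ m * sin (eta - t)) by (unfold al; field; lra).
  assert (Ebe : be * sin eta = r ^ m * sin t * (2 * cos eta)) by (unfold be, r; field; lra).
  exists m, al, be. repeat split; auto.
  - pose proof (SIN_bound (eta - t)). pose proof (SIN_bound t). pose proof (COS_bound eta).
    assert (B1 : r ^ m * sin (eta - t) <= r ^ m) by nra.
    assert (B2 : sin t * cos eta <= 1) by nra.
    assert (B3 : r ^ m * (sin t * cos eta) <= r ^ m) by nra.
    assert ((al + be) * sin eta <= 3 * r ^ m).
    { rewrite Rmult_plus_distr_r, Eal, Ebe. nra. }
    nra.
  - rewrite apow by auto. rewrite a_eq by auto. fold r.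
    replace (INR m * eta) with (t + 2 * INR (S N) * PI) by (unfold t; ring).
    rewrite cos_period, sin_period.
    assert (Es : sin (eta - t) = sin eta * cos t - cos eta * sin t) by apply sin_minus.
    apply C_ext; simpl.
    + unfold al, be. rewrite Es. field. lra.
    + unfold be. field. lra.
Qed.

Theorem lemma3p1 (eta : R) (Heta : 0 < eta < PI / 3) :
  is_polygon (convex_hull (Vset eta)).
Proof.
  destruct (zero_pt eta Heta) as [x0 [x1 [x2 [n1 [n2 [Hx0 [Hx1 [Hx2 [Hxs Hrel]]]]]]]]].
  destruct (rec_rel eta Heta) as [m [al [be [Hm2 [Hal [Hbe [Habs Hrec]]]]]]].
  set (K := (m + n1 + n2 + 2)%nat).
  set (F := b_ eta 0 :: map (z_ eta) (seq 0 K) ++ map (w_ eta) (seq 1 K)).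
  set (T := fun y => In y F).
  assert (Hz : forall k, (k < K)%nat -> cn T (z_ eta k) 1).
  { intros k Hk. apply cn_pt. unfold T, F. right. apply in_or_app. left.
    apply in_map. apply in_seq. lia. }
  assert (Hw : forall k, (1 <= k <= K)%nat -> cn T (w_ eta k) 1).
  { intros k Hk. apply cn_pt. unfold T, F. right. apply in_or_app. right.
    apply in_map. apply in_seq. lia. }
  assert (H0 : cn T (RtoC 0) 1).
  { replace (RtoC 0) with (RtoC x0 * z_ eta 0 + RtoC x1 * z_ eta n2 + RtoC x2 * z_ eta n1)%C.
    - apply combo3; auto; apply Hz; unfold K; lia.
    - transitivity ((RtoC (c_ eta) * a_ eta) *
        (RtoC x0 + RtoC x1 * Cpow (a_ eta) n2 + RtoC x2 * Cpow (a_ eta) n1))%C.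
      + unfold z_. cbn [Cpow]. ring.
      + rewrite Hrel. ring. }
  assert (H1 : cn T (RtoC 1) 1).
  { replace (RtoC 1) with (RtoC x0 * w_ eta 1 + RtoC x1 * w_ eta (S n2) + RtoC x2 * w_ eta (S n1))%C.
    - apply combo3; auto; apply Hw; unfold K; lia.
    - transitivity ((RtoC x0 + RtoC x1 + RtoC x2) - RtoC (c_ eta * Cmod (a_ eta) ^ 2) * a_ eta *
        (RtoC x0 + RtoC x1 * Cpow (a_ eta) n2 + RtoC x2 * Cpow (a_ eta) n1))%C.
      + unfold w_. cbn [Cpow]. ring.
      + rewrite Hrel, <- !RtoC_plus, Hxs. ring. }
  assert (Zrec : forall n, z_ eta (n + m) =
     (RtoC al * z_ eta n + RtoC be * z_ eta (S n) + RtoC (1 - al - be) * RtoC 0)%C).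
  { intros n. unfold z_. rewrite (Cpow_S _ (n + m)), Cpow_add_r, Hrec, !Cpow_S. ring. }
  assert (Wrec : forall n, w_ eta (n + m) =
     (RtoC al * w_ eta n + RtoC be * w_ eta (S n) + RtoC (1 - al - be) * RtoC 1)%C).
  { intros n. unfold w_. rewrite Cpow_add_r, Hrec, Cpow_S, !RtoC_minus. ring. }
  assert (Zall : forall k, cn T (z_ eta k) 1).
  { intros k. induction k as [k IH] using lt_wf_ind.
    destruct (lt_dec k K) as [Hk|Hk]; [apply Hz; auto|].
    replace k with ((k - m) + m)%nat by lia. rewrite Zrec.
    apply combo3; try lra; [apply IH; unfold K in Hk; lia | apply IH; unfold K in Hk; lia | exact H0]. }
  assert (Wall : forall k, (1 <= k)%nat -> cn T (w_ eta k) 1).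
  { intros k. induction k as [k IH] using lt_wf_ind. intros Hk1.
    destruct (le_dec k K) as [Hk|Hk]; [apply Hw; lia|].
    replace k with ((k - m) + m)%nat by lia. rewrite Wrec.
    apply combo3; try lra; [apply IH; unfold K in Hk; lia | apply IH; unfold K in Hk; lia | exact H1]. }
  exists F. intros x. split; intros Hx; apply hull_cone; apply hull_cone in Hx.
  - apply cn_idem with (S := Vset eta); auto.
    intros y [Hy|[[k Hy]|[k [Hk Hy]]]]; subst.
    + apply cn_pt. unfold T, F. left. auto.
    + apply Zall.
    + apply Wall; auto.
  - apply cn_idem with (S := fun y => In y F); auto.
    intros y Hy. apply cn_pt. unfold F in Hy. destruct Hy as [Hy|Hy].
    + left. auto.
    + apply in_app_or in Hy. destruct Hy as [Hy|Hy]; apply in_map_iff in Hy;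
        destruct Hy as [k [Hk Hin]]; apply in_seq in Hin; subst.
      * right; left; exists k; auto.
      * right; right; exists k; split; [lia|auto].
Qed.
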